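(* Consider the hybrid system (2.2) where $F$ is defined for all $(h,x)\in[0,r]\times\mathbb{R}^n$. Suppose there exist $\sigma>0$, $\lambda\in(0,1)$ and $a\in K_\infty$ such that $|z(t,z_0)|\le\exp(-\sigma t)a(|z_0|)$ for all $t\ge0$, $z_0\in\mathbb{R}^n$, and $|x(t,x_0;u)|\le\exp(-\lambda\sigma t)a(|x_0|)$ for all $t\ge0$, $x_0\in\mathbb{R}^n$ and all locally bounded $u:\mathbb{R}^+\to\mathbb{R}^+$. Suppose further there is a continuous $L:\mathbb{R}^n\to(0,+\infty)$ such that $|F(h,z)-F(h,x)|\le L(x_0)|z-x|$ for all $x_0\in\mathbb{R}^n$, all $z,x$ with $|x|,|z|\le a(|x_0|)$ and all $h\in[0,\varphi(x)]$. For $x_0$, $u$ given, let $\tau_i,h_i$ be the switching times and step sizes of $x(\cdot,x_0;u)$, let $e(t):=z(t,x_0)-x(t,x_0;u)$, $\tilde d(h,x):=\frac{z(h,x)-x}{h}-F(h,x)$ and $D_i(x_0):=\max_{j=0,\dots,i}|\tilde d(h_j,z(\tau_j,x_0))|$. Then for all $i\ge0$, $$|e(\tau_{i+1})|\le\frac{D_i(x_0)}{L(x_0)}\big(\exp(L(x_0)\tau_{i+1})-1\big)$$ and $$|e(\tau_{i+1})|\le\Big(\frac{D_i(x_0)}{L(x_0)}\Big)^{\frac{\lambda\sigma}{\lambda\sigma+L(x_0)}}\big(2a(|x_0|)\big)^{\frac{L(x_0)}{\lambda\sigma+L(x_0)}}.$$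
   Context: Standing framework: $f$ locally Lipschitz, $f(0)=0$, $z(t,x)$ the solution of $\dot z=f(z)$ with $z(0)=x$. $r>0$, $\varphi:\mathbb{R}^n\to(0,r]$ continuous, $F$ with $F(h,0)=0$, $\lim_{h\to0^+}F(h,x)=f(x)$, and $|F(h,x)|\le|x|M(|x|)$ for a continuous nondecreasing $M$. The hybrid system (2.2): for each locally bounded $u:\mathbb{R}^+\to\mathbb{R}^+$ and $x_0$, $\tau_0=0$, $x(0)=x_0$, $h_i=\varphi(x(\tau_i))\exp(-u(\tau_i))$, $\tau_{i+1}=\tau_i+h_i$, $x(t)=x(\tau_i)+(t-\tau_i)F(h_i,x(\tau_i))$ on $[\tau_i,\tau_{i+1}]$; its solution is $x(t,x_0;u)$. $K_\infty$ is the class of continuous increasing $\rho:\mathbb{R}^+\to\mathbb{R}^+$ with $\rho(0)=0$ and $\rho(s)\to\infty$ as $s\to\infty$. *)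

(* Defs.v *)
From mathcomp Require Import ssreflect ssrfun ssrbool eqtype ssrnat fintype bigop.
From Stdlib Require Import Reals.
Open Scope R_scope.

Definition vec (n : nat) := 'I_n -> R.
Definition vadd {n} (x y : vec n) : vec n := fun i => x i + y i.
Definition vsub {n} (x y : vec n) : vec n := fun i => x i - y i.
Definition vscale {n} (c : R) (x : vec n) : vec n := fun i => c * x i.
Definition vzero {n} : vec n := fun _ => 0.
Definition vnorm {n} (x : vec n) : R :=
  sqrt (\big[Rplus/0]_(i < n) (x i * x i)).

Definition cont_on_nonneg (g : R -> R) : Prop :=
  forall s, 0 <= s -> forall eps, 0 < eps -> exists delta, 0 < delta /\
    forall s', 0 <= s' -> Rabs (s' - s) < delta -> Rabs (g s' - g s) < eps.

Definition K_infty (a : R -> R) : Prop :=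
  cont_on_nonneg a /\
  (forall s, 0 <= s -> 0 <= a s) /\
  (forall s t, 0 <= s -> s < t -> a s < a t) /\
  a 0 = 0 /\
  (forall B, exists s, 0 <= s /\ B < a s).

Definition cont_vec_R {n} (g : vec n -> R) : Prop :=
  forall x eps, 0 < eps -> exists delta, 0 < delta /\
    forall y, vnorm (vsub y x) < delta -> Rabs (g y - g x) < eps.

Definition locally_lipschitz {n} (f : vec n -> vec n) : Prop :=
  forall x, exists delta K, 0 < delta /\ 0 <= K /\
    forall y w, vnorm (vsub y x) < delta -> vnorm (vsub w x) < delta ->
      vnorm (vsub (f y) (f w)) <= K * vnorm (vsub y w).

Definition is_flow {n} (f : vec n -> vec n) (z : R -> vec n -> vec n) : Prop :=
  forall x : vec n,
    z 0 x = x /\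
    (forall i : 'I_n, forall eps, 0 < eps -> exists delta, 0 < delta /\
        forall s, 0 <= s < delta -> Rabs (z s x i - x i) < eps) /\
    (forall (i : 'I_n) t, 0 < t ->
        derivable_pt_lim (fun s => z s x i) t (f (z t x) i)).

Definition loc_bounded_nonneg (u : R -> R) : Prop :=
  (forall t, 0 <= t -> 0 <= u t) /\
  (forall T, exists B, forall t, 0 <= t <= T -> u t <= B).

(* The hybrid system (2.2): the pair (tau_i, x(tau_i)) *)
Fixpoint hyb_state {n} (phi : vec n -> R) (F : R -> vec n -> vec n)
    (u : R -> R) (x0 : vec n) (i : nat) : R * vec n :=
  match i with
  | O => (0, x0)
  | S k =>
      let (tk, xk) := hyb_state phi F u x0 k in
      let hk := phi xk * exp (- u tk) in
      (tk + hk, vadd xk (vscale hk (F hk xk)))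
  end.

Definition hyb_tau {n} phi F u (x0 : vec n) i := fst (hyb_state phi F u x0 i).
Definition hyb_x {n} phi F u (x0 : vec n) i := snd (hyb_state phi F u x0 i).
Definition hyb_h {n} phi F u (x0 : vec n) i :=
  phi (hyb_x phi F u x0 i) * exp (- u (hyb_tau phi F u x0 i)).

(* value of x(t, x0; u) for t in [tau_i, tau_{i+1}] *)
Definition hyb_traj {n} phi F u (x0 : vec n) (i : nat) (t : R) : vec n :=
  vadd (hyb_x phi F u x0 i)
       (vscale (t - hyb_tau phi F u x0 i)
               (F (hyb_h phi F u x0 i) (hyb_x phi F u x0 i))).

Definition dtilde {n} (z : R -> vec n -> vec n) (F : R -> vec n -> vec n)
    (h : R) (x : vec n) : vec n :=
  vsub (vscale (/ h) (vsub (z h x) x)) (F h x).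

Fixpoint Dmax {n} (z : R -> vec n -> vec n) phi F u (x0 : vec n) (i : nat) : R :=
  let dj j := vnorm (dtilde z F (hyb_h phi F u x0 j) (z (hyb_tau phi F u x0 j) x0)) in
  match i with
  | O => dj O
  | S k => Rmax (Dmax z phi F u x0 k) (dj (S k))
  end.

(* real power with 0^p = 0 (used only with p > 0 and base >= 0) *)
Definition rpow (x p : R) : R := if Rlt_dec 0 x then Rpower x p else 0.

(* Main.v *)
From HB Require Import structures.
Require Import Defs.
From mathcomp Require Import ssreflect ssrfun ssrbool eqtype ssrnat seq fintype bigop.
From Stdlib Require Import Reals Lra Psatz FunctionalExtensionality Classical.
Open Scope R_scope.

Lemma Rplus_assoc' : associative Rplus. Proof. move=> *; ring. Qed.
HB.instance Definition _ := Monoid.isComLaw.Build R 0 Rplus Rplus_assoc' Rplus_comm Rplus_0_l.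

Section V.
Context {n : nat}.

Lemma sum_le (F G : 'I_n -> R) : (forall i, F i <= G i) ->
  \big[Rplus/0]_(i<n) F i <= \big[Rplus/0]_(i<n) G i.
Proof.
move=> H; apply: (big_ind2 (fun a b => a <= b)); first lra.
- move=> *; lra.
- move=> i _; exact: H.
Qed.

Lemma sum_scal (c : R) (F : 'I_n -> R) :
  \big[Rplus/0]_(i<n) (c * F i) = c * \big[Rplus/0]_(i<n) F i.
Proof.
apply: (big_ind2 (fun a b => a = c * b)); first ring.
- move=> x1 x2 y1 y2 -> ->; ring.
- done.
Qed.

Lemma sum_ge0 (F : 'I_n -> R) : (forall i, 0 <= F i) -> 0 <= \big[Rplus/0]_(i<n) F i.
Proof.
move=> H; apply: (big_ind (fun a => 0 <= a)); first lra.
- move=> *; lra.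
- move=> i _; exact: H.
Qed.

Definition ssq (v : vec n) := \big[Rplus/0]_(i<n) (v i * v i).

Lemma ssq_ge0 v : 0 <= ssq v.
Proof. apply: sum_ge0 => i; nra. Qed.

Lemma vnorm_ge0 (v : vec n) : 0 <= vnorm v.
Proof. exact: sqrt_pos. Qed.

Lemma vnorm_sq (v : vec n) : vnorm v * vnorm v = ssq v.
Proof. rewrite /vnorm sqrt_sqrt //; exact: ssq_ge0. Qed.

Lemma CS (u v : vec n) : \big[Rplus/0]_(i<n) (u i * v i) <= vnorm u * vnorm v.
Proof.
set S := \big[Rplus/0]_(i<n) (u i * v i).
have Hk : forall k, 0 < k -> 2 * S <= k * ssq u + ssq v / k.
  move=> k kp.
  have -> : k * ssq u + ssq v / k =
     \big[Rplus/0]_(i<n) (k * (u i * u i) + / k * (v i * v i)).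
    by rewrite big_split /= !sum_scal /ssq; field; lra.
  rewrite /S -sum_scal; apply: sum_le => i.
  have : 0 <= (k * u i - v i) * (k * u i - v i) / k.
    rewrite /Rdiv; apply: Rmult_le_pos; [apply: Rle_0_sqr| left; apply: Rinv_0_lt_compat; lra].
  move=> h.
  have -> : k * (u i * u i) + / k * (v i * v i) =
      2 * (u i * v i) + (k * u i - v i) * (k * u i - v i) / k by field; lra.
  lra.
set al := vnorm u; set be := vnorm v.
have a0 : 0 <= al by apply: vnorm_ge0.
have b0 : 0 <= be by apply: vnorm_ge0.
have Hu : ssq u = al * al by rewrite vnorm_sq.
have Hv : ssq v = be * be by rewrite vnorm_sq.
have He : forall e, 0 < e -> S <= al * be + e * (al + be) / 2.
  move=> e ep.
  have kp : 0 < (be + e) / (al + e) by apply: Rdiv_lt_0_compat; lra.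
  have := Hk _ kp; rewrite Hu Hv.
  have -> : (be + e) / (al + e) * (al * al) = (be + e) * (al * al / (al + e)) by field; lra.
  have -> : be * be / ((be + e) / (al + e)) = (al + e) * (be * be / (be + e)) by field; lra.
  have h1 : al * al / (al + e) <= al.
    apply: (Rmult_le_reg_r (al + e)); first lra.
    rewrite /Rdiv Rmult_assoc Rinv_l; nra.
  have h2 : be * be / (be + e) <= be.
    apply: (Rmult_le_reg_r (be + e)); first lra.
    rewrite /Rdiv Rmult_assoc Rinv_l; nra.
  nra.
apply: Rnot_lt_le => Hc.
have ep : 0 < (S - al * be) / (al + be + 1) by apply: Rdiv_lt_0_compat; lra.
have := He _ ep.
have : (S - al * be) / (al + be + 1) * (al + be) <= (S - al * be).
  apply: (Rmult_le_reg_r (al + be + 1)); first lra.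
  have -> : (S - al * be) / (al + be + 1) * (al + be) * (al + be + 1) = (S - al*be) * (al+be) by field; lra.
  nra.
lra.
Qed.

Lemma vnorm_add (u v : vec n) : vnorm (vadd u v) <= vnorm u + vnorm v.
Proof.
have a0 := vnorm_ge0 u; have b0 := vnorm_ge0 v.
rewrite {1}/vnorm -(sqrt_square (vnorm u + vnorm v)); last lra.
apply: sqrt_le_1_alt.
have -> : \big[Rplus/0]_(i < n) (vadd u v i * vadd u v i) =
   ssq u + 2 * \big[Rplus/0]_(i<n) (u i * v i) + ssq v.
  rewrite /ssq -sum_scal -!big_split /=; apply: eq_bigr => i _; rewrite /vadd; ring.
rewrite -!vnorm_sq; have := CS u v; nra.
Qed.

Lemma vnorm_scale c (v : vec n) : vnorm (vscale c v) = Rabs c * vnorm v.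
Proof.
rewrite /vnorm.
have -> : \big[Rplus/0]_(i < n) (vscale c v i * vscale c v i) =
   (c * c) * \big[Rplus/0]_(i<n) (v i * v i).
  rewrite -sum_scal; apply: eq_bigr => i _; rewrite /vscale; ring.
rewrite sqrt_mult; [|nra|exact: ssq_ge0].
by rewrite (sqrt_Rsqr_abs c).
Qed.

Lemma vnorm_sub_le (u v : vec n) : vnorm (vsub u v) <= vnorm u + vnorm v.
Proof.
have -> : vsub u v = vadd u (vscale (-1) v).
  by apply: functional_extensionality => i; rewrite /vsub /vadd /vscale; ring.
apply: Rle_trans (vnorm_add _ _) _.
rewrite vnorm_scale Rabs_Ropp Rabs_R1; lra.
Qed.

End V.
Lemma big_fun n (P : (R -> R) -> R -> Prop) (F : 'I_n -> R -> R) (G : 'I_n -> R) :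
  P (fun _ => 0) 0 ->
  (forall g h a b, P g a -> P h b -> P (fun t => g t + h t) (a + b)) ->
  (forall i, P (F i) (G i)) ->
  P (fun t => \big[Rplus/0]_(i<n) F i t) (\big[Rplus/0]_(i<n) G i).
Proof.
move=> H0 HS HF.
suff: forall r : seq 'I_n, P (fun t => \big[Rplus/0]_(i <- r) F i t) (\big[Rplus/0]_(i <- r) G i).
  by apply.
elim=> [|j r IH].
  have -> : (fun t => \big[Rplus/0]_(i <- [::]) F i t) = (fun _ => 0).
    by apply: functional_extensionality => t; rewrite big_nil.
  by rewrite big_nil.
have -> : (fun t => \big[Rplus/0]_(i <- j :: r) F i t) =
   (fun t => F j t + \big[Rplus/0]_(i <- r) F i t).
  by apply: functional_extensionality => t; rewrite big_cons.
rewrite big_cons; exact: HS.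
Qed.

Definition RC (g : R -> R) (m : R) := limit1_in g (fun s => m <= s) (g m) m.

Lemma RC_sum n (F : 'I_n -> R -> R) m : (forall i, RC (F i) m) ->
  RC (fun t => \big[Rplus/0]_(i<n) F i t) m.
Proof.
move=> H; rewrite /RC /=.
apply: (big_fun _ (fun g a => limit1_in g (fun s => m <= s) a m) F (fun i => F i m)).
- exact: (limit_free (fun _ => 0) _ 0 m).
- move=> g h a b Hg Hh; exact: limit_plus.
- exact: H.
Qed.

Lemma dlim_eq g x l l' : derivable_pt_lim g x l -> l = l' -> derivable_pt_lim g x l'.
Proof. by move=> H <-. Qed.

Lemma D_sum n (F : 'I_n -> R -> R) (G : 'I_n -> R) x :
  (forall i, derivable_pt_lim (F i) x (G i)) ->
  derivable_pt_lim (fun t => \big[Rplus/0]_(i<n) F i t) x (\big[Rplus/0]_(i<n) G i).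
Proof.
move=> H.
apply: (big_fun _ (fun g a => derivable_pt_lim g x a)).
- exact: (derivable_pt_lim_const 0 x).
- move=> g h a b Hg Hh; exact: (derivable_pt_lim_plus _ _ _ _ _ Hg Hh).
- exact: H.
Qed.

Lemma RC_of_cont g m : continuity_pt g m -> RC g m.
Proof.
move=> H eps ep; have [d [dp Hd]] := H eps ep.
exists d; split => // x [hx1 hx2].
case: (Req_dec x m) => [->|ne]; first by rewrite /dist /= /R_dist Rminus_diag Rabs_R0.
apply: Hd; split => //; split => //; lra.
Qed.

Lemma RC_of_D g m l : derivable_pt_lim g m l -> RC g m.
Proof. move=> H; apply: RC_of_cont; apply: derivable_continuous_pt; by exists l. Qed.
Definition sol {n} (f : vec n -> vec n) (y : R -> vec n) :=
  (forall i m, 0 <= m -> RC (fun s => y s i) m) /\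
  (forall i t, 0 < t -> derivable_pt_lim (fun s => y s i) t (f (y t) i)).

Lemma limit_const (c x0 : R) D : limit1_in (fun _ => c) D c x0.
Proof.
move=> e ep; exists 1; split; first lra.
move=> x _; rewrite /dist /= /R_dist Rminus_diag Rabs_R0; lra.
Qed.

Lemma ssq_zero n (v : vec n) : ssq v = 0 -> forall i, v i = 0.
Proof.
move=> H i.
have : v i * v i <= ssq v.
  have e : ssq v = v i * v i + \big[Rplus/0]_(j < n | j != i) (v j * v j) by rewrite /ssq (bigD1 i).
  have h : 0 <= \big[Rplus/0]_(j < n | j != i) (v j * v j).
    apply: (big_ind (fun a => 0 <= a)); [lra| move=> *; lra| move=> *; nra].
  rewrite e; lra.
rewrite H => h; nra.
Qed.

Lemma RC_near n (y : R -> vec n) m :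
  (forall i, RC (fun s => y s i) m) ->
  forall d, 0 < d -> exists a, 0 < a /\
    forall s, m <= s < m + a -> vnorm (vsub (y s) (y m)) < d.
Proof.
move=> H d dp.
have Hq : RC (fun s => \big[Rplus/0]_(i<n) ((y s i - y m i) * (y s i - y m i))) m.
  apply: RC_sum => i; rewrite /RC /=.
  apply: limit_mul; apply: limit_minus; (exact: H || exact: limit_const).
have dd : d * d > 0 by nra.
have [a [ap Ha]] := Hq _ dd.
exists a; split => // s [s1 s2].
have := Ha s; rewrite /dist /= /R_dist.
have -> : \big[Rplus/0]_(i < n) ((y m i - y m i) * (y m i - y m i)) = 0.
  rewrite big1 // => i _; ring.
rewrite Rminus_0_r => h.
have {h} h : \big[Rplus/0]_(i < n) ((y s i - y m i) * (y s i - y m i)) < d * d.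
  apply: Rle_lt_trans (Rle_abs _) _; apply: h; split => //.
  rewrite Rabs_right; lra.
rewrite /vnorm -(sqrt_square d); last lra.
apply: sqrt_lt_1_alt; split => //.
apply: sum_ge0 => i; exact: Rle_0_sqr.
Qed.

Lemma exp_lin_D c s : derivable_pt_lim (fun t => exp (c * t)) s (exp (c * s) * c).
Proof.
have h1 : derivable_pt_lim (fun t => c * t) s c.
  apply: (dlim_eq (fun t => c * t) s (0 * s + c * 1)).
  - exact: (derivable_pt_lim_mult (fct_cte c) id s 0 1 (derivable_pt_lim_const c s) (derivable_pt_lim_id s)).
  - ring.
exact: (derivable_pt_lim_comp (fun t => c * t) exp s c (exp (c * s)) h1 (derivable_pt_lim_exp _)).
Qed.

Lemma loc_ext n (f : vec n -> vec n) (y1 y2 : R -> vec n) m :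
  locally_lipschitz f -> sol f y1 -> sol f y2 -> 0 <= m -> y1 m = y2 m ->
  exists eps, 0 < eps /\ forall s, m <= s <= m + eps -> y1 s = y2 s.
Proof.
move=> Hlip [R1 D1] [R2 D2] m0 e0.
have [dl [K [dlp [K0 HL]]]] := Hlip (y1 m).
have [a1 [a1p Ha1]] := RC_near _ y1 m (fun i => R1 i m m0) dl dlp.
have [a2 [a2p Ha2]] := RC_near _ y2 m (fun i => R2 i m m0) dl dlp.
rewrite -e0 in Ha2.
set eps := Rmin a1 a2 / 2.
have epsp : 0 < eps by rewrite /eps; apply: Rdiv_lt_0_compat; [apply: Rmin_pos|]; lra.
have epsa1 : eps < a1 by have := Rmin_l a1 a2; rewrite /eps; lra.
have epsa2 : eps < a2 by have := Rmin_r a1 a2; rewrite /eps; lra.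
exists eps; split => //.
set w := fun s => \big[Rplus/0]_(i<n) ((y1 s i - y2 s i) * (y1 s i - y2 s i)).
set dw := fun s => \big[Rplus/0]_(i<n)
  ((f (y1 s) i - f (y2 s) i) * (y1 s i - y2 s i) + (y1 s i - y2 s i) * (f (y1 s) i - f (y2 s) i)).
set c := - (2 * K).
set v := fun s => w s * exp (c * s).
set dv := fun s => dw s * exp (c * s) + w s * (exp (c * s) * c).
have w0 : forall s, 0 <= w s by move=> s; apply: sum_ge0 => i; exact: Rle_0_sqr.
have Dw : forall s, 0 < s -> derivable_pt_lim w s (dw s).
  move=> s sp; apply: D_sum => i.
  apply: (derivable_pt_lim_mult (fun t => y1 t i - y2 t i) (fun t => y1 t i - y2 t i));
  (apply: (derivable_pt_lim_minus (fun t => y1 t i) (fun t => y2 t i)); [exact: D1|exact: D2]).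
have Dv : forall s, 0 < s -> derivable_pt_lim v s (dv s).
  move=> s sp; exact: (derivable_pt_lim_mult w (fun t => exp (c * t)) s _ _ (Dw s sp) (exp_lin_D c s)).
have dwle : forall s, m < s <= m + eps -> dw s <= 2 * K * w s.
  move=> s [s1 s2].
  have -> : dw s = 2 * \big[Rplus/0]_(i<n) ((vsub (y1 s) (y2 s)) i * (vsub (f (y1 s)) (f (y2 s))) i).
    rewrite /dw -sum_scal; apply: eq_bigr => i _; rewrite /vsub; ring.
  have hw : w s = vnorm (vsub (y1 s) (y2 s)) * vnorm (vsub (y1 s) (y2 s)) by rewrite vnorm_sq.
  have hl : vnorm (vsub (f (y1 s)) (f (y2 s))) <= K * vnorm (vsub (y1 s) (y2 s)).
    apply: HL; [apply: Ha1|apply: Ha2]; lra.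
  have := CS (vsub (y1 s) (y2 s)) (vsub (f (y1 s)) (f (y2 s))).
  have := vnorm_ge0 (vsub (y1 s) (y2 s)).
  set A := \big[Rplus/0]_(i<n) _. rewrite hw. nra.
have dvle : forall s, m < s <= m + eps -> dv s <= 0.
  move=> s hs; have := dwle s hs; have := exp_pos (c * s); rewrite /dv /c => ep h.
  have -> : dw s * exp (- (2 * K) * s) + w s * (exp (- (2 * K) * s) * - (2 * K)) =
     exp (- (2 * K) * s) * (dw s - 2 * K * w s) by ring.
  have : dw s - 2 * K * w s <= 0 by lra.
  nra.
have vm : v m = 0.
  rewrite /v /w big1; first ring.
  move=> i _; rewrite e0; ring.
have RCv : RC v m.
  rewrite /RC /v /=.
  apply: limit_mul.
  - have := RC_sum _ (fun i s => (y1 s i - y2 s i) * (y1 s i - y2 s i)) m.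
    rewrite /RC /=; apply => i.
    apply: limit_mul; apply: limit_minus; (exact: R1 || exact: R2).
  - apply: (RC_of_D (fun t => exp (c * t)) m _ (exp_lin_D c m)).
have vle : forall s, m < s <= m + eps -> v s <= 0.
  move=> s [s1 s2]; apply: Rnot_lt_le => vs.
  have [al [alp Hal]] := RCv (v s) vs.
  set s0 := m + Rmin al (s - m) / 2.
  have hmin1 := Rmin_l al (s - m); have hmin2 := Rmin_r al (s - m).
  have hminp : 0 < Rmin al (s - m) by apply: Rmin_pos; lra.
  have hs0 : m < s0 < s by rewrite /s0; lra.
  have := Hal s0; rewrite /dist /= /R_dist vm Rminus_0_r.
  move=> h; have {h} h : Rabs (v s0) < v s.
    apply: h; split; first lra. rewrite Rabs_right; rewrite /s0; lra.
  have [cc [hc1 hc2]] := MVT_cor2 v dv s0 s (proj2 hs0) (fun cc hc => Dv cc ltac:(lra)).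
  have := dvle cc ltac:(lra).
  have := Rle_abs (v s0).
  nra.
move=> s [s1 s2].
case: (Req_dec s m) => [->|ne] //.
have hv := vle s ltac:(lra).
have wz : w s = 0.
  have := exp_pos (c * s); have := w0 s; rewrite /v in hv; nra.
apply: functional_extensionality => i.
have := ssq_zero _ (vsub (y1 s) (y2 s)) wz i; rewrite /vsub; lra.
Qed.

Lemma sol_uniq n (f : vec n -> vec n) (y1 y2 : R -> vec n) :
  locally_lipschitz f -> sol f y1 -> sol f y2 -> y1 0 = y2 0 ->
  forall T, 0 <= T -> y1 T = y2 T.
Proof.
move=> Hlip S1 S2 e0.
set G := fun T => forall s, 0 <= s <= T -> y1 s = y2 s.
suff HG : forall T, 0 <= T -> G T by move=> T hT; apply: (HG T hT); lra.
move=> T0 hT0; apply: NNPP => nG.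
set E := fun s => 0 <= s /\ G s.
have Eb : bound E.
  exists T0 => s [s0 Gs]; apply: Rnot_lt_le => lt; apply: nG => s' hs'; apply: Gs; lra.
have E0 : E 0.
  split; first lra. move=> s hs; have -> : s = 0 by lra. done.
have Ee : exists x, E x by exists 0.
have [m [Hub Hlub]] := completeness E Eb Ee.
have m0 : 0 <= m by apply: Hub.
have Hlt : forall s, 0 <= s < m -> y1 s = y2 s.
  move=> s [s0 sm].
  have : ~ is_upper_bound E s by move=> hub; have := Hlub s hub; lra.
  move=> nub; apply: NNPP => ne; apply: nub => e [e0' Ge].
  apply: Rnot_lt_le => lt; apply: ne; apply: Ge; lra.
have Hm : y1 m = y2 m.
  case: (Req_dec m 0) => [->|mne] //.
  have mp : 0 < m by lra.
  case: S1 => _ D1; case: S2 => _ D2.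
  apply: functional_extensionality => i; apply: NNPP => ne.
  set g := fun s => y1 s i - y2 s i.
  have gc : continuity_pt g m.
    apply: derivable_continuous_pt; exists (f (y1 m) i - f (y2 m) i).
    exact: (derivable_pt_lim_minus (fun s => y1 s i) (fun s => y2 s i) _ _ _ (D1 i m mp) (D2 i m mp)).
  have gm : 0 < Rabs (g m) by apply: Rabs_pos_lt; rewrite /g; lra.
  have [d [dp Hd]] := gc _ gm.
  set s := Rmax 0 (m - d / 2).
  have hs1 := Rmax_l 0 (m - d / 2); have hs2 := Rmax_r 0 (m - d / 2).
  have hs3 : s < m by rewrite /s; apply: Rmax_lub_lt; lra.
  have gs : g s = 0 by rewrite /g (Hlt s) ?Rminus_diag //; lra.
  have := Hd s; rewrite /dist /= /R_dist gs Rminus_0_l Rabs_Ropp => h.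
  have : Rabs (g m) < Rabs (g m).
    apply: h; split; first by split => //; apply: Rgt_not_eq; lra.
    rewrite Rabs_left; rewrite /s in hs3 *; lra.
  lra.
have Gm : G m.
  move=> s hs; case: (Req_dec s m) => [->|ne] //; apply: Hlt; lra.
have [eps [epsp Heps]] := loc_ext n f y1 y2 m Hlip S1 S2 m0 Hm.
have : E (m + eps).
  split; first lra.
  move=> s hs; case: (Rle_lt_dec s m) => h; [apply: Gm|apply: Heps]; lra.
move=> hE; have := Hub _ hE; lra.
Qed.

Lemma flow_RC n (f : vec n -> vec n) z : is_flow f z ->
  forall x i t, 0 <= t -> RC (fun s => z s x i) t.
Proof.
move=> Hf x i t t0; case: (Req_dec t 0) => [->|ne].
- case: (Hf x) => z0 [Hc _] eps ep.
  have [d [dp Hd]] := Hc i eps ep.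
  exists d; split => // s [s1 s2]; rewrite /dist /= /R_dist z0.
  apply: Hd; split => //; move: s2; rewrite /dist /= /R_dist Rminus_0_r Rabs_right; lra.
- case: (Hf x) => _ [_ Hd].
  apply: RC_of_D; apply: Hd; lra.
Qed.

Lemma RC_shift g tau t : RC g (tau + t) -> RC (fun s => g (tau + s)) t.
Proof.
move=> H eps ep; have [a [ap Ha]] := H eps ep.
exists a; split => // s [s1 s2]; apply: Ha; split; first lra.
move: s2; rewrite /dist /= /R_dist.
by have -> : tau + s - (tau + t) = s - t by ring.
Qed.

Lemma D_shift g tau t l : derivable_pt_lim g (tau + t) l ->
  derivable_pt_lim (fun s => g (tau + s)) t l.
Proof.
move=> H eps ep; have [d Hd] := H eps ep.
exists d => h hn hd; rewrite -Rplus_assoc; exact: Hd.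
Qed.

Lemma flow_shift n (f : vec n -> vec n) z : locally_lipschitz f -> is_flow f z ->
  forall x0 tau h, 0 <= tau -> 0 <= h -> z (tau + h) x0 = z h (z tau x0).
Proof.
move=> Hl Hf x0 tau h t0 h0.
have := sol_uniq n f (fun s => z (tau + s) x0) (fun s => z s (z tau x0)) Hl.
apply => //.
- split.
  + move=> i m m0; apply: (RC_shift (fun s => z s x0 i)).
    apply: flow_RC => //; lra.
  + move=> i t tp; apply: (D_shift (fun s => z s x0 i)).
    case: (Hf x0) => _ [_ Hd]; apply: Hd; lra.
- split.
  + move=> i m m0; exact: flow_RC.
  + move=> i t tp; case: (Hf (z tau x0)) => _ [_ Hd]; exact: Hd.
- by rewrite Rplus_0_r; case: (Hf (z tau x0)) => ->.
Qed.
Lemma exp_le' x y : x <= y -> exp x <= exp y.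
Proof. case=> h; [left; exact: exp_increasing|by rewrite h; right]. Qed.

Lemma ln_le' x y : 0 < x -> x <= y -> ln x <= ln y.
Proof. move=> hx; case=> h; [left; exact: ln_increasing|by rewrite h; right]. Qed.

Lemma combine (e A B L mu t : R) : 0 <= e -> 0 <= A -> 0 <= B -> 0 < L -> 0 < mu ->
  e <= A * (exp (L * t) - 1) -> e <= B * exp (- mu * t) ->
  e <= rpow A (mu / (mu + L)) * rpow B (L / (mu + L)).
Proof.
move=> e0 A0 B0 L0 m0 h1 h2.
have hE := exp_pos (L * t); have hE2 := exp_pos (- mu * t).
have h1' : e <= A * exp (L * t) by nra.
rewrite /rpow.
case: (Rlt_dec 0 A) => hA; last first.
  rewrite /= Rmult_0_l; nra.
case: (Rlt_dec 0 B) => hB; last first.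
  rewrite /= Rmult_0_r; nra.
rewrite /= /Rpower -exp_plus.
case: (Req_dec e 0) => [->|ep]; first by left; exact: exp_pos.
have ep' : 0 < e by lra.
rewrite -(exp_ln e ep'); apply: exp_le'.
have l1 : ln e <= ln A + L * t.
  rewrite -(ln_exp (L * t)) -ln_mult //; exact: ln_le'.
have l2 : ln e <= ln B + - mu * t.
  rewrite -(ln_exp (- mu * t)) -ln_mult //; exact: ln_le'.
set th := mu / (mu + L); set th' := L / (mu + L).
have t0 : 0 <= th by rewrite /th; apply: Rlt_le; apply: Rdiv_lt_0_compat; lra.
have t0' : 0 <= th' by rewrite /th'; apply: Rlt_le; apply: Rdiv_lt_0_compat; lra.
have hs : th * ln e + th' * ln e = ln e by rewrite /th /th'; field; lra.
have hc : th * L * t = th' * mu * t by rewrite /th /th'; field; lra.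
have k1 := Rmult_le_compat_l _ _ _ t0 l1.
have k2 := Rmult_le_compat_l _ _ _ t0' l2.
nra.
Qed.

Lemma hyb_step n phi F u (x0 : vec n) j :
  hyb_tau phi F u x0 (S j) = hyb_tau phi F u x0 j + hyb_h phi F u x0 j /\
  hyb_x phi F u x0 (S j) = vadd (hyb_x phi F u x0 j)
     (vscale (hyb_h phi F u x0 j) (F (hyb_h phi F u x0 j) (hyb_x phi F u x0 j))).
Proof.
rewrite /hyb_h /hyb_tau /hyb_x /=.
by case: (hyb_state phi F u x0 j).
Qed.

Lemma hyb_traj_start n phi F u (x0 : vec n) j :
  hyb_traj phi F u x0 j (hyb_tau phi F u x0 j) = hyb_x phi F u x0 j.
Proof.
apply: functional_extensionality => i; rewrite /hyb_traj /vadd /vscale; ring.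
Qed.

Lemma hyb_traj_end n phi F u (x0 : vec n) j :
  hyb_traj phi F u x0 j (hyb_tau phi F u x0 (S j)) = hyb_x phi F u x0 (S j).
Proof.
have [e1 e2] := hyb_step n phi F u x0 j.
rewrite e1 e2; apply: functional_extensionality => i; rewrite /hyb_traj /vadd /vscale; ring.
Qed.

Lemma hyb_h_pos n phi F u (x0 : vec n) j : (forall x, 0 < phi x) -> 0 < hyb_h phi F u x0 j.
Proof. move=> H; rewrite /hyb_h; apply: Rmult_lt_0_compat; [exact: H|exact: exp_pos]. Qed.

Lemma hyb_tau_ge0 n phi F u (x0 : vec n) j : (forall x, 0 < phi x) -> 0 <= hyb_tau phi F u x0 j.
Proof.
move=> H; elim: j => [|j IH]; first by rewrite /hyb_tau /=; lra.
have [e1 _] := hyb_step n phi F u x0 j; rewrite e1.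
have := hyb_h_pos n phi F u x0 j H; lra.
Qed.

Lemma Dmax_ge n z phi F u (x0 : vec n) j :
  vnorm (dtilde z F (hyb_h phi F u x0 j) (z (hyb_tau phi F u x0 j) x0)) <= Dmax z phi F u x0 j
  /\ Dmax z phi F u x0 j <= Dmax z phi F u x0 (S j) /\ 0 <= Dmax z phi F u x0 j.
Proof.
case: j => [|j] /=.
- split; first lra. split; first exact: Rmax_l. exact: vnorm_ge0.
- split; first exact: Rmax_r. split; first exact: Rmax_l.
  apply: Rle_trans (Rmax_r _ _); exact: vnorm_ge0.
Qed.

Lemma vnorm_self n (x : vec n) : vnorm (vsub x x) = 0.
Proof. rewrite /vnorm big1 ?sqrt_0 // => i _; rewrite /vsub; ring. Qed.

Theorem mainTheorem10 (n : nat) (f : vec n -> vec n) (z : R -> vec n -> vec n)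
  (r : R) (phi : vec n -> R) (F : R -> vec n -> vec n) (M : R -> R)
  (sigma lambda : R) (a : R -> R) (L : vec n -> R) :
  (* standing framework *)
  locally_lipschitz f -> f vzero = vzero -> is_flow f z ->
  0 < r -> cont_vec_R phi -> (forall x, 0 < phi x <= r) ->
  (forall h, 0 <= h <= r -> F h vzero = vzero) ->
  (forall x eps, 0 < eps -> exists delta, 0 < delta /\
      forall h, 0 < h < delta -> h <= r -> vnorm (vsub (F h x) (f x)) < eps) ->
  cont_on_nonneg M -> (forall s t, 0 <= s <= t -> M s <= M t) ->
  (forall h x, 0 <= h <= r -> vnorm (F h x) <= vnorm x * M (vnorm x)) ->
  (* hypotheses of the theorem *)
  0 < sigma -> 0 < lambda < 1 -> K_infty a ->
  (forall t z0, 0 <= t -> vnorm (z t z0) <= exp (- sigma * t) * a (vnorm z0)) ->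
  (forall x0 u, loc_bounded_nonneg u ->
     forall i t, hyb_tau phi F u x0 i <= t <= hyb_tau phi F u x0 (S i) ->
       vnorm (hyb_traj phi F u x0 i t)
         <= exp (- lambda * sigma * t) * a (vnorm x0)) ->
  cont_vec_R L -> (forall x, 0 < L x) ->
  (forall x0 zz x, vnorm x <= a (vnorm x0) -> vnorm zz <= a (vnorm x0) ->
     forall h, 0 <= h <= phi x ->
       vnorm (vsub (F h zz) (F h x)) <= L x0 * vnorm (vsub zz x)) ->
  (* conclusion *)
  forall x0 u, loc_bounded_nonneg u ->
  forall i : nat,
    let tau1 := hyb_tau phi F u x0 (S i) in
    let e1 := vnorm (vsub (z tau1 x0) (hyb_x phi F u x0 (S i))) in
    let D := Dmax z phi F u x0 i in
    e1 <= D / L x0 * (exp (L x0 * tau1) - 1) /\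
    e1 <= rpow (D / L x0) (lambda * sigma / (lambda * sigma + L x0))
          * rpow (2 * a (vnorm x0)) (L x0 / (lambda * sigma + L x0)).
Proof.
move=> Hlip f0 Hflow r0 phic phib F0 Flim Mc Mmono FM sig0 lam01 Ka Hz Hx Lc L0 HL x0 u Hu i.
move=> tau1 e1 D.
have phip : forall x, 0 < phi x by move=> x; case: (phib x).
have [Kc [a0 [amono [a00 aunb]]]] := Ka.
have Ax0 : 0 <= a (vnorm x0) by apply: a0; exact: vnorm_ge0.
have Lx0 := L0 x0.
have ls : 0 < lambda * sigma by nra.
have Tge : forall j, 0 <= hyb_tau phi F u x0 j by move=> j; exact: hyb_tau_ge0.
have hpos : forall j, 0 < hyb_h phi F u x0 j by move=> j; exact: hyb_h_pos.
have Tle : forall j, hyb_tau phi F u x0 j <= hyb_tau phi F u x0 (S j).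
  move=> j; have [e _] := hyb_step n phi F u x0 j; rewrite e; have := hpos j; lra.
have Xb : forall j, vnorm (hyb_x phi F u x0 j) <= a (vnorm x0).
  move=> j; have := Hx x0 u Hu j (hyb_tau phi F u x0 j) (conj (Rle_refl _) (Tle j)).
  rewrite hyb_traj_start => h; apply: Rle_trans h _.
  have : exp (- lambda * sigma * hyb_tau phi F u x0 j) <= 1.
    rewrite -exp_0; apply: exp_le'; have tj := Tge j; have := Rmult_le_pos _ _ (Rlt_le _ _ ls) tj; move=> ?; nra.
  nra.
have Zb : forall j, vnorm (z (hyb_tau phi F u x0 j) x0) <= a (vnorm x0).
  move=> j; have := Hz (hyb_tau phi F u x0 j) x0 (Tge j) => h; apply: Rle_trans h _.
  have : exp (- sigma * hyb_tau phi F u x0 j) <= 1.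
    rewrite -exp_0; apply: exp_le'; have tj := Tge j; have := Rmult_le_pos _ _ (Rlt_le _ _ sig0) tj; move=> ?; nra.
  nra.
have step : forall j,
   vnorm (vsub (z (hyb_tau phi F u x0 (S j)) x0) (hyb_x phi F u x0 (S j))) <=
   (1 + hyb_h phi F u x0 j * L x0) * vnorm (vsub (z (hyb_tau phi F u x0 j) x0) (hyb_x phi F u x0 j))
   + hyb_h phi F u x0 j * vnorm (dtilde z F (hyb_h phi F u x0 j) (z (hyb_tau phi F u x0 j) x0)).
  move=> j; have [e1' e2'] := hyb_step n phi F u x0 j.
  rewrite e1' e2' (flow_shift n f z Hlip Hflow x0 _ _ (Tge j) (Rlt_le _ _ (hpos j))).
  have hp := hpos j.
  have hphi : hyb_h phi F u x0 j <= phi (hyb_x phi F u x0 j).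
    rewrite /hyb_h; have := phip (hyb_x phi F u x0 j).
    have : exp (- u (hyb_tau phi F u x0 j)) <= 1.
      rewrite -exp_0; apply: exp_le'; have ? := (proj1 Hu) _ (Tge j); lra.
    nra.
  set h := hyb_h phi F u x0 j in hp hphi *; set zj := z (hyb_tau phi F u x0 j) x0;
  set xj := hyb_x phi F u x0 j.
  have -> : vsub (z h zj) (vadd xj (vscale h (F h xj))) =
     vadd (vadd (vsub zj xj) (vscale h (vsub (F h zj) (F h xj)))) (vscale h (dtilde z F h zj)).
    apply: functional_extensionality => k.
    rewrite /vsub /vadd /vscale /dtilde /vsub /vscale; field; apply: Rgt_not_eq; exact: hp.
  apply: Rle_trans (vnorm_add _ _) _.
  have := vnorm_add (vsub zj xj) (vscale h (vsub (F h zj) (F h xj))).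
  rewrite !vnorm_scale Rabs_right; last lra.
  have := HL x0 zj xj (Xb j) (Zb j) h (conj (Rlt_le _ _ hp) hphi).
  move=> k1 k2.
  have k3 := Rmult_le_compat_l _ _ _ (Rlt_le _ _ hp) k1.
  lra.
have Pst : forall j,
   vnorm (vsub (z (hyb_tau phi F u x0 j) x0) (hyb_x phi F u x0 j)) <=
      Dmax z phi F u x0 j / L x0 * (exp (L x0 * hyb_tau phi F u x0 j) - 1) ->
   vnorm (vsub (z (hyb_tau phi F u x0 (S j)) x0) (hyb_x phi F u x0 (S j))) <=
      Dmax z phi F u x0 j / L x0 * (exp (L x0 * hyb_tau phi F u x0 (S j)) - 1).
  move=> j Rj; have := step j; have [e1' _] := hyb_step n phi F u x0 j.
  rewrite e1' Rmult_plus_distr_l exp_plus.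
  have [dd [_ D0]] := Dmax_ge n z phi F u x0 j.
  set Q := Dmax z phi F u x0 j / L x0.
  have hQ : Dmax z phi F u x0 j = Q * L x0 by rewrite /Q; field; lra.
  have Q0 : 0 <= Q by rewrite /Q; apply: Rmult_le_pos => //; left; apply: Rinv_0_lt_compat.
  rewrite hQ in dd.
  set E := exp (L x0 * hyb_tau phi F u x0 j) in Rj *.
  have E1 : 1 <= E by rewrite /E -exp_0; apply: exp_le'; have ? := Tge j; nra.
  set h := hyb_h phi F u x0 j in dd *.
  have hp : 0 < h by exact: hpos.
  have G1 := exp_ineq1_le (L x0 * h).
  set G := exp (L x0 * h) in G1 *.
  have k1 : 0 <= Q * E * (G - (1 + L x0 * h)) by apply: Rmult_le_pos; [apply: Rmult_le_pos; lra| lra].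
  have k2 := Rmult_le_compat_l (1 + h * L x0) _ _ ltac:(nra) Rj.
  have k3 := Rmult_le_compat_l h _ _ ltac:(lra) dd.
  move=> st; rewrite -/Q in k2; nra.
have Rall : forall j,
   vnorm (vsub (z (hyb_tau phi F u x0 j) x0) (hyb_x phi F u x0 j)) <=
      Dmax z phi F u x0 j / L x0 * (exp (L x0 * hyb_tau phi F u x0 j) - 1).
  elim=> [|j IH].
  - have -> : hyb_tau phi F u x0 0 = 0 by [].
    have -> : hyb_x phi F u x0 0 = x0 by [].
    have [-> _] := Hflow x0.
    rewrite vnorm_self Rmult_0_r exp_0; lra.
  - apply: Rle_trans (Pst j IH) _.
    have [_ [dm D0]] := Dmax_ge n z phi F u x0 j.
    have : 0 <= exp (L x0 * hyb_tau phi F u x0 (S j)) - 1.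
      have : 1 <= exp (L x0 * hyb_tau phi F u x0 (S j)).
        rewrite -exp_0; apply: exp_le'; have ? := Tge (S j); nra.
      lra.
    move=> k; apply: Rmult_le_compat_r => //.
    rewrite /Rdiv; apply: Rmult_le_compat_r => //; left; apply: Rinv_0_lt_compat; lra.
have first : e1 <= D / L x0 * (exp (L x0 * tau1) - 1) by exact: Pst i (Rall i).
split => //.
have second : e1 <= 2 * a (vnorm x0) * exp (- (lambda * sigma) * tau1).
  rewrite /e1; apply: Rle_trans (vnorm_sub_le _ _) _.
  have t0 : 0 <= tau1 by exact: Tge.
  have := Hz tau1 x0 t0.
  have := Hx x0 u Hu i tau1 (conj (Tle i) (Rle_refl _)).
  rewrite hyb_traj_end.
  have : exp (- sigma * tau1) <= exp (- (lambda * sigma) * tau1).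
    apply: exp_le'; have := Rmult_le_pos _ _ (Rlt_le _ _ sig0) t0; move=> ?; nra.
  have -> : - lambda * sigma * tau1 = - (lambda * sigma) * tau1 by ring.
  move=> k1 k2 k3; nra.
have A0 : 0 <= D / L x0.
  rewrite /Rdiv; apply: Rmult_le_pos; [ |left; apply: Rinv_0_lt_compat; lra].
  by have [_ [_ ?]] := Dmax_ge n z phi F u x0 i.
apply: combine; first exact: vnorm_ge0.
all: try first [exact: first | exact: second | exact: A0 | lra].
Qed.
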